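(* Let $L\ge1$ and $n\ge2$ be integers, let $0<f_s<f_c<f_p$ with $f_c=\frac{f_p-f_s}{n-1}$, let $M_1=-\lfloor L/2\rfloor$, $M_2=\lfloor (L-1)/2\rfloor$, and for $\xi\in\{1,\dots,nL\}$ let $\mathcal{F}(\xi)=\big(\lceil \xi/n\rceil-\lfloor L/2\rfloor-1\big)f_p+\big((\xi-1)\bmod n\big)f_c$ and $I_\xi=[\mathcal{F}(\xi),\mathcal{F}(\xi)+f_s]$. Let $N_{\mathrm{sig}}\ge1$ and let $f_1^{\min}<f_1^{\max}<f_2^{\min}<\dots<f_{N_{\mathrm{sig}}}^{\min}<f_{N_{\mathrm{sig}}}^{\max}$ be reals in $[M_1f_p,(M_2+1)f_p]$, with $B_j=f_j^{\max}-f_j^{\min}$, $\mathcal{B}=\sum_{j}B_j$ and $\mathcal{T}=\bigcup_j[f_j^{\min},f_j^{\max})$. Let $\Sigma=\{\xi\in\{1,\dots,nL\}: I_\xi\cap\mathcal{T} \text{ has positive length}\}$. If $$2\sum_{j=1}^{N_{\mathrm{sig}}}\Big(n\big\lfloor \tfrac{B_j}{f_p}\big\rfloor+\Big\lceil \tfrac{\operatorname{mod}(B_j,f_p)}{f_c}\Big\rceil+1\Big)f_s+2N_{\mathrm{sig}}f_c\le\mathcal{B},$$ then $$2|\Sigma|\,f_s+2N_{\mathrm{sig}}f_c\le\mathcal{B}.$$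
   Context: $\operatorname{mod}(B,f_p)=B-f_p\lfloor B/f_p\rfloor$. Row $\xi$ of the signal matrix represents the spectrum on $I_\xi$, so $\Sigma$ plays the role of the row support $\operatorname{supp}(\mathbf{X})$ of the signal matrix. The quantity $2|\Sigma|f_s+\mathcal{B}+2N_{\mathrm{sig}}f_c$ is an upper bound on the overall sampling rate of the scheme, and the conclusion states it is at most $2\mathcal{B}$. *)

(* Defs.v *)
From HB Require Import structures.
From mathcomp Require Import all_boot all_order all_algebra.
From mathcomp Require Import all_classical all_reals all_analysis.
Set Implicit Arguments. Unset Strict Implicit. Unset Printing Implicit Defensive.
Import Order.TTheory GRing.Theory Num.Theory.
Local Open Scope ring_scope.
Local Open Scope classical_set_scope.

Definition rmod {R : realType} (B p : R) : R := B - p * (Num.floor (B / p))%:~R.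

Definition Ffreq {R : realType} (n L : nat) (fp fc : R) (xi : nat) : R :=
  (Num.ceil (xi%:R / n%:R : R) - (L %/ 2)%:Z - 1)%:~R * fp + ((xi.-1) %% n)%:R * fc.

Definition Ichan {R : realType} (n L : nat) (fp fc fs : R) (xi : nat) : set R :=
  `[Ffreq n L fp fc xi, Ffreq n L fp fc xi + fs]%classic.

(* T = union_j [f_j^min, f_j^max), signals indexed j = 0 .. Nsig-1 *)
Definition Tsupp {R : realType} (Nsig : nat) (fmin fmax : nat -> R) : set R :=
  \bigcup_(j in [set j : nat | (j < Nsig)%N]) `[fmin j, fmax j[%classic.

(* Sigma = { xi in 1..nL : I_xi /\ T has positive (Lebesgue) length };
   represented as a set of ordinals i : 'I_(n*L) with xi = i + 1 *)
Definition Sigma {R : realType} (n L : nat) (fp fc fs : R) (Nsig : nat)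
  (fmin fmax : nat -> R) : {set 'I_(n * L)} :=
  [set i : 'I_(n * L) | `[< (0 < (@lebesgue_measure R)
       (Ichan n L fp fc fs i.+1 `&` Tsupp Nsig fmin fmax))%E >] ].

(* Main.v *)
Require Import Defs.
From HB Require Import structures.
From mathcomp Require Import all_boot all_order all_algebra.
From mathcomp Require Import all_classical all_reals all_analysis.
From mathcomp Require Import zify ring lra.
Import Order.TTheory GRing.Theory Num.Theory.
Local Open Scope ring_scope.

Lemma keyG (R : realType) (n : nat) (fs fc fp : R) (d t Q k : nat) :
  (1 <= n)%N -> 0 < fs -> fs < fc -> fp = (n%:R - 1) * fc + fs ->
  (n * t <= d + n - 1)%N -> (k <= n - 1)%N ->
  d%:R * fc - t%:R * (fc - fs) < Q%:R * fp + k%:R * fc + fs ->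
  (d <= Q * n + k)%N.
Proof.
move=> hn hfs hfc hfp hnt hk hlt.
rewrite leqNgt; apply/negP => hd.
have [e he] : exists e, d = (Q * n + k + 1 + e)%N.
  by exists (d - (Q * n + k + 1))%N; timeout 20 lia.
have ht : (t <= Q + 1 + e)%N by subst d; nia.
have ht' : t%:R <= Q%:R + 1 + e%:R :> R.
  by move: ht; rewrite -(ler_nat R) !natrD.
have hd' : d%:R = Q%:R * n%:R + k%:R + 1 + e%:R :> R.
  by rewrite he !natrD natrM.
have he0 : 0 <= e%:R :> R by [].
move: hlt; rewrite hd' hfp => hlt.
have : (Q%:R + 1 + e%:R - t%:R) * (fc - fs) >= 0 :> R.
  by apply: mulr_ge0; timeout 20 lra.
nra.
Qed.
Lemma ceil_div (R : realType) (n i : nat) : (0 < n)%N ->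
  Num.ceil ((i.+1)%:R / n%:R : R) = (i %/ n)%:Z + 1.
Proof.
move=> hn; apply: ceil_def.
have hn' : (0 : R) < n%:R by rewrite ltr0n.
have hi : i%:R = (i %/ n)%:R * n%:R + (i %% n)%:R :> R.
  by rewrite -natrM -natrD -divn_eq.
have hr : (i %% n)%:R + 1 <= n%:R :> R.
  by have := ltn_pmod i hn; rewrite -(ler_nat R) -natr1 => h; timeout 20 lra.
rewrite addrK intrD /= -!pmulrn ltr_pdivlMr // ler_pdivrMr // -[(i.+1)%:R]natr1 hi.
apply/andP; split; first by have : 0 <= (i %% n)%:R :> R by []; nra.
rewrite mulrDl mul1r; timeout 20 lra.
Qed.

Lemma Ffreq_eq (R : realType) (n L : nat) (fs fc fp : R) (i : nat) :
  (0 < n)%N -> fp = (n%:R - 1) * fc + fs ->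
  Ffreq n L fp fc i.+1 = i%:R * fc - (i %/ n)%:R * (fc - fs) - (L %/ 2)%:R * fp.
Proof.
move=> hn hfp; rewrite /Ffreq ceil_div //= .
have -> : ((i %/ n)%:Z + 1 - (L %/ 2)%:Z - 1) = (i %/ n)%:Z - (L %/ 2)%:Z by ring.
rewrite intrB /=.
have hi : i%:R = (i %/ n)%:R * n%:R + (i %% n)%:R :> R.
  by rewrite -natrM -natrD -divn_eq.
rewrite hi hfp. ring.
Qed.
Lemma card_span (N k : nat) (S : {set 'I_N}) :
  (forall i j, i \in S -> j \in S -> (i <= j)%N -> (j - i <= k)%N) -> (#|S| <= k.+1)%N.
Proof.
move=> hS.
case: (set_0Vmem S) => [-> | [i0 hi0]]; first by rewrite cards0.
case: (arg_minnP (fun i : 'I_N => nat_of_ord i) hi0) => lo hlo hmin.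
have hinj : {in S &, injective (fun i : 'I_N => (inord (i - lo) : 'I_k.+1))}.
  move=> i j hi hj /(congr1 val) /=.
  have h1 := hS _ _ hlo hi (hmin _ hi).
  have h2 := hS _ _ hlo hj (hmin _ hj).
  have h3 := hmin _ hi. have h4 := hmin _ hj.
  rewrite !inordK; try timeout 20 lia.
  move=> h; apply/val_inj => /=; timeout 20 lia.
rewrite -(card_in_imset hinj).
by apply: leq_trans (max_card _) _; rewrite card_ord.
Qed.

Lemma card_bigcup_le (T : finType) (N : nat) (A : nat -> {set T}) :
  (#|(\bigcup_(j < N) A j)%SET| <= \sum_(j < N) #|A j|)%N.
Proof.
elim: N => [|N IH]; first by rewrite !big_ord0 cards0.
rewrite !big_ord_recr /=.
apply: leq_trans (leq_card_setU _ _) _.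
by rewrite leq_add2r.
Qed.

Lemma div_gap n x y : (0 < n)%N -> (x <= y)%N -> (n * (y %/ n - x %/ n) <= y - x + n - 1)%N.
Proof.
move=> hn hxy.
have hle := leq_div2r n hxy.
have hr := ltn_pmod x hn.
have hx := divn_eq x n. have hy := divn_eq y n.
move: hle hr hx hy; generalize (x %/ n)%N (x %% n)%N (y %/ n)%N (y %% n)%N => ax rx ay ry hle hr hx hy.
rewrite mulnBr.
nia.
Qed.

Lemma count_j (R : realType) (L n : nat) (fs fc fp a b : R) (S : {set 'I_(n * L)}) :
  (2 <= n)%N -> 0 < fs -> fs < fc -> fc < fp -> fp = (n%:R - 1) * fc + fs -> a < b ->
  (forall i : 'I_(n * L), i \in S ->
     Ffreq n L fp fc i.+1 < b /\ a < Ffreq n L fp fc i.+1 + fs) ->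
  (#|S|%:R : R) <=
    (n%:Z * Num.floor ((b - a) / fp) + Num.ceil (rmod (b - a) fp / fc) + 1)%:~R.
Proof.
move=> hn hfs hfc hfcp hfp hab hS.
have hn1 : (0 < n)%N by timeout 20 lia.
have hfp0 : 0 < fp by timeout 20 lra.
have hfc0 : 0 < fc by timeout 20 lra.
have hB0 : 0 <= (b - a) / fp by apply: divr_ge0; timeout 20 lra.
have hq0 : 0 <= Num.floor ((b - a) / fp) by rewrite floor_ge0.
move: (eqxx (Num.floor ((b - a) / fp))); rewrite floor_eq => /andP[hq1 hq2].
have [qn hqn] : exists qn : nat, Num.floor ((b - a) / fp) = qn%:Z.
  by exists `|Num.floor ((b - a) / fp)|%N; rewrite gez0_abs.
rewrite /rmod hqn in hq1 hq2 *.
rewrite intrD /= -!pmulrn in hq1 hq2 *.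
rewrite ler_pdivlMr // in hq1. rewrite ltr_pdivrMr // in hq2.
set rho := b - a - fp * qn%:R.
have hrho0 : 0 <= rho by rewrite /rho; timeout 20 lra.
have hrho1 : rho < fp by rewrite /rho; timeout 20 lra.
have hc0 : 0 <= Num.ceil (rho / fc).
  rewrite ceil_ge0; have : 0 <= rho / fc by apply: divr_ge0; timeout 20 lra.
  timeout 20 lra.
move: (eqxx (Num.ceil (rho / fc))); rewrite ceil_eq => /andP[hc1 hc2].
have [cn hcn] : exists cn : nat, Num.ceil (rho / fc) = cn%:Z.
  by exists `|Num.ceil (rho / fc)|%N; rewrite gez0_abs.
rewrite hcn in hc1 hc2 *.
rewrite intrB /= -!pmulrn in hc1 hc2.
rewrite ltr_pdivlMr // in hc1. rewrite ler_pdivrMr // in hc2.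
have -> : (n%:Z * qn%:Z + cn%:Z + 1) = ((n * qn + cn).+1)%:Z by rewrite -addn1 !PoszD PoszM.
rewrite -pmulrn ler_nat.
apply: card_span => i j hi hj hij.
have [hi1 hi2] := hS _ hi. have [hj1 hj2] := hS _ hj.
rewrite (@Ffreq_eq R n L fs fc fp i hn1 hfp) in hi1 hi2.
rewrite (@Ffreq_eq R n L fs fc fp j hn1 hfp) in hj1 hj2.
have hdiv : (i %/ n <= j %/ n)%N by apply: leq_div2r.
have hnt : (n * (j %/ n - i %/ n) <= (j - i) + n - 1)%N.
  exact: div_gap.
have hdiff : (j - i)%:R * fc - (j %/ n - i %/ n)%:R * (fc - fs) < b - a + fs.
  rewrite !natrB //; timeout 20 lra.
have [hcs|hcs] := leqP cn (n - 1).
  have := @keyG R n fs fc fp (j - i) (j %/ n - i %/ n) qn cn hn1 hfs hfc hfp hnt hcs.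
  move=> h; have : (j - i <= qn * n + cn)%N by apply: h; rewrite /rho in hc2; timeout 20 lra.
  by rewrite (mulnC qn n).
have := @keyG R n fs fc fp (j - i) (j %/ n - i %/ n) qn.+1 0 hn1 hfs hfc hfp hnt (leq0n _).
move=> h; have : (j - i <= qn.+1 * n + 0)%N.
  by apply: h; rewrite -natr1 /rho in hrho1 *; timeout 20 lra.
move=> h'; apply: leq_trans h' _.
rewrite addn0 mulSn addnC mulnC leq_add2l.
clear -hcs hn1; lia.
Qed.

Local Open Scope classical_set_scope.
Lemma hit_of_pos (R : realType) (s fs : R) (Nsig : nat) (fmin fmax : nat -> R) :
  (0 < (@lebesgue_measure R) (`[s, (s + fs)%R] `&` Tsupp Nsig fmin fmax))%E ->
  exists j, (j < Nsig)%N /\ s < fmax j /\ fmin j < s + fs.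
Proof.
move=> hpos; apply: contrapT => hne.
have h0 : (@lebesgue_measure R) (`[s, (s + fs)%R] `&` Tsupp Nsig fmin fmax) = 0%E.
  have := @subset_measure0 _ _ _ (@lebesgue_measure R) _ [set (s + fs)%R]. apply.
  - have hm : measurable (`[s, (s + fs)%R] `&` Tsupp Nsig fmin fmax).
      apply: measurableI; first exact: measurable_itv.
      by apply: bigcup_measurable => k _; exact: measurable_itv.
    exact: hm.
  - have hm : measurable [set (s + fs)%R] by exact: measurable_set1.
    exact: hm.
  - move=> x [] /= hx [j /= hj hxj].
    move: hx hxj; rewrite !in_itv /= => /andP[h1 h2] /andP[h3 h4].
    have [hA|hA] := ltP s (fmax j); last by lra.
    have [hB|hB] := ltP (fmin j) (s + fs); last by lra.
    by exfalso; apply: hne; exists j.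
  - exact: lebesgue_measure_set1.
by move: hpos; rewrite h0 ltxx.
Qed.
Local Close Scope classical_set_scope.

Theorem theorem1 (R : realType) (L n : nat) (fs fc fp : R) (Nsig : nat)
  (fmin fmax : nat -> R) :
  (1 <= L)%N -> (2 <= n)%N ->
  0 < fs -> fs < fc -> fc < fp ->
  fc = (fp - fs) / (n%:R - 1) ->
  (1 <= Nsig)%N ->
  (forall j, (j < Nsig)%N -> fmin j < fmax j) ->
  (forall j, (j.+1 < Nsig)%N -> fmax j < fmin j.+1) ->
  (forall j, (j < Nsig)%N ->
     (- (L %/ 2)%:Z)%:~R * fp <= fmin j /\ fmin j <= ((L.-1 %/ 2)%:Z + 1)%:~R * fp /\
     (- (L %/ 2)%:Z)%:~R * fp <= fmax j /\ fmax j <= ((L.-1 %/ 2)%:Z + 1)%:~R * fp) ->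
  2 * (\sum_(j < Nsig)
        ((n%:Z * Num.floor ((fmax j - fmin j) / fp)
          + Num.ceil (rmod (fmax j - fmin j) fp / fc) + 1)%:~R * fs))
    + 2 * Nsig%:R * fc
    <= \sum_(j < Nsig) (fmax j - fmin j) ->
  2 * (#|Sigma n L fp fc fs Nsig fmin fmax|)%:R * fs + 2 * Nsig%:R * fc
    <= \sum_(j < Nsig) (fmax j - fmin j).
Proof.
move=> hL hn hfs hfc hfcp hfcdef hN hmm hsep hbnd hhyp.
have hn1 : (0 < n)%N by lia.
have hn2 : (2%:R : R) <= n%:R by rewrite ler_nat.
have hne : (n%:R - 1 : R) != 0 by apply/eqP => h; lra.
have hfp : fp = (n%:R - 1) * fc + fs by rewrite hfcdef; field.
pose S (j : nat) := [set i : 'I_(n * L) |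
  (Ffreq n L fp fc i.+1 < fmax j) && (fmin j < Ffreq n L fp fc i.+1 + fs)].
have hsub : Sigma n L fp fc fs Nsig fmin fmax \subset (\bigcup_(j < Nsig) S j)%SET.
  apply/fintype.subsetP => i; rewrite inE => /asboolP hpos.
  rewrite /Ichan in hpos.
  have [j [hj [h1 h2]]] := @hit_of_pos _ _ _ _ _ _ hpos.
  by apply/bigcupP; exists (Ordinal hj) => //; rewrite inE h1 h2.
have hcard : ((#|Sigma n L fp fc fs Nsig fmin fmax|)%:R : R) <=
    \sum_(j < Nsig) (n%:Z * Num.floor ((fmax j - fmin j) / fp)
          + Num.ceil (rmod (fmax j - fmin j) fp / fc) + 1)%:~R.
  apply: le_trans (_ : ((\sum_(j < Nsig) #|S j|)%N)%:R <= _).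
    rewrite ler_nat; apply: leq_trans (subset_leq_card hsub) _.
    exact: card_bigcup_le.
  rewrite natr_sum; apply: ler_sum => j _.
  apply: (@count_j R L n fs fc fp (fmin j) (fmax j)) => //; first exact: hmm.
  by move=> i; rewrite inE => /andP[].
rewrite -mulr_suml in hhyp.
set X := ((#|Sigma n L fp fc fs Nsig fmin fmax|)%:R : R) in hcard *.
set Y := \sum_(j < Nsig) _ in hcard hhyp.
have : 0 <= (Y - X) * fs by apply: mulr_ge0; lra.
lra.
Qed.
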